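(* Let $n\ge 2$ and let $X\subseteq\mathbb{Z}_{2n}^2$ with $|X|=4n+1$. Suppose there is $a\in\mathbb{Z}_{2n}$ such that exactly $2n-1$ elements of $X$ have first coordinate $a$. Then there exists $S\subseteq X$ with $|S|=2n$ and $\sum_{s\in S}s=(0,0)$. *)

(* Defs.v *)
From mathcomp Require Import all_boot all_algebra.
Set Implicit Arguments. Unset Strict Implicit. Unset Printing Implicit Defensive.

(* Main.v *)
Require Import Defs.
From mathcomp Require Import all_boot all_algebra.
From Stdlib Require Import Classical.
From mathcomp Require Import zify.
Import GRing.Theory.
Local Open Scope ring_scope.


Ltac clean_ctx := repeat match goal with
 | H : ?T |- _ => lazymatch T with
     | is_true (leq _ _) => fail
     | is_true (~~ (?a == ?b)) => let t := type of a in
         lazymatch t with nat => fail | _ => clear H end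
     | is_true (?a == ?b) => let t := type of a in
         lazymatch t with nat => fail | _ => clear H end
     | @eq nat _ _ => fail
     | nat => fail
     | _ => clear H
     end
 end.
Ltac clia := clean_ctx; lia.

Lemma ex_subset (T : finType) (A : {set T}) (k : nat) :
  (k <= #|A|)%N -> exists B : {set T}, B \subset A /\ #|B| = k.
Proof.
elim: k => [|k IH] hk; first by exists set0; rewrite sub0set cards0.
have [B [sBA cB]] := IH (ltnW hk).
have : (0 < #|A :\: B|)%N by rewrite cardsD (setIidPr sBA) cB subn_gt0.
case/card_gt0P => x; rewrite inE => /andP [xB xA].
exists (x |: B); split; first by rewrite subUset sub1set xA sBA.
by rewrite cardsU1 xB cB.
Qed.

Lemma zsf_list (G : zmodType) (T : finType) (f : T -> G) (W : {set T})
  (zsf : forall S : {set T}, S \subset W -> S != set0 -> \sum_(t in S) f t != 0)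
  (s : seq T) : uniq s -> all (fun z => z \in W) s -> s != [::] ->
  \sum_(z <- s) f z != 0.
Proof.
move=> us aW sn.
rewrite big_uniq //.
have -> : \sum_(i in s) f i = \sum_(i in [set z in s]) f i.
  by apply: eq_bigl => i; rewrite inE.
apply: zsf.
  by apply/subsetP => z; rewrite inE => zs; move/allP: aW; apply.
case: s sn us aW => // z s _ _ _; apply/set0Pn; exists z; by rewrite inE mem_head.
Qed.

Lemma swap_lemma (G : finZmodType) (T : finType) (f : T -> G) (W : {set T})
  (zsf : forall S : {set T}, S \subset W -> S != set0 -> \sum_(t in S) f t != 0)
  (cW : #|W| = #|G|.-1) : forall x y, x \in W -> y \in W -> f x = f y.
Proof.
move=> x y xW yW.
have [-> //|nxy] := eqVneq x y.
apply/eqP/negPn/negP => nfxy.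
set r := enum (W :\ x :\ y).
have ur : uniq r by apply: enum_uniq.
have rW : all (fun z => z \in W) r.
  by apply/allP => z; rewrite mem_enum !inE => /and3P [].
have xr : x \notin r by rewrite mem_enum !inE eqxx andbF.
have yr : y \notin r by rewrite mem_enum !inE eqxx.
have sr : size r = (#|W| - 2)%N.
  rewrite -cardE; have := cardsD1 y (W :\ x); have := cardsD1 x W.
  rewrite !inE eq_sym nxy yW xW /= => -> ->; by rewrite add1n add1n subn2.
pose P (i : 'I_(size r).+1) := f x + f y + \sum_(z <- take i r) f z.
have Pinj : injective P.
  move=> i j; rewrite /P => /addrI Hij.
  wlog lij : i j Hij / (i <= j)%N.
    move=> H; case: (leqP i j) => l; first exact: H.
    by apply/esym/H => //; apply: ltnW.
  apply/val_inj/eqP; rewrite eqn_leq lij /=; apply/negP => /negP; rewrite -ltnNge => lt.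
  move: Hij; rewrite -(subnKC lij) takeD big_cat /= => /eqP.
  rewrite eq_sym addrC -subr_eq0 addrK; apply/negP.
  apply: (@zsf_list _ _ f W zsf (take (j - i) (drop i r))).
  - by apply: take_uniq; apply: drop_uniq.
  - apply/allP => z /mem_take /mem_drop; by move/allP: rW; apply.
  - rewrite -size_eq0 size_takel; first by rewrite subn_eq0 -ltnNge.
    rewrite size_drop leq_sub2r //; by move: (ltn_ord j).
have Pnz : forall i, P i != 0.
  move=> i; rewrite /P.
  have -> : f x + f y + \sum_(z <- take i r) f z = \sum_(z <- x :: y :: take i r) f z.
    by rewrite !big_cons addrA.
  apply: (@zsf_list _ _ f W zsf) => //=.
  - rewrite inE negb_or nxy /= (contra (@mem_take _ _ _ _) xr).
    by rewrite (contra (@mem_take _ _ _ _) yr) take_uniq.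
  - rewrite xW yW /=; apply/allP => z /mem_take; by move/allP: rW; apply.
have Pfy : forall i, P i != f y.
  move=> i; rewrite /P -addrA (addrC (f y)) addrA -subr_eq0 addrK.
  have -> : f x + \sum_(z <- take i r) f z = \sum_(z <- x :: take i r) f z.
    by rewrite !big_cons.
  apply: (@zsf_list _ _ f W zsf) => //=.
  - by rewrite (contra (@mem_take _ _ _ _) xr) take_uniq.
  - rewrite xW /=; apply/allP => z /mem_take; by move/allP: rW; apply.
have Pfx : forall i, P i != f x.
  move=> i; rewrite /P -addrA -subr_eq0 (addrC (f x)) addrK.
  have -> : f y + \sum_(z <- take i r) f z = \sum_(z <- y :: take i r) f z.
    by rewrite !big_cons.
  apply: (@zsf_list _ _ f W zsf) => //=.
  - by rewrite (contra (@mem_take _ _ _ _) yr) take_uniq.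
  - rewrite yW /=; apply/allP => z /mem_take; by move/allP: rW; apply.
have fx0 : f x != 0.
  have := zsf [set x]; rewrite big_set1 sub1set xW; apply => //.
  by apply/set0Pn; exists x; rewrite inE.
have fy0 : f y != 0.
  have := zsf [set y]; rewrite big_set1 sub1set yW; apply => //.
  by apply/set0Pn; exists y; rewrite inE.
set V := f y |: (f x |: [set P i | i in 'I_(size r).+1]).
have cV : #|V| = #|G|.
  rewrite cardsU1 cardsU1 card_imset // card_ord.
  have -> : f x \notin [set P i | i in 'I_(size r).+1].
    by apply/imsetP => -[i _ E]; move: (Pfx i); rewrite E eqxx.
  rewrite in_setU1 negb_or eq_sym nfxy /=.
  have -> : f y \notin [set P i | i in 'I_(size r).+1].
    by apply/imsetP => -[i _ E]; move: (Pfy i); rewrite E eqxx.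
  have : (2 <= #|W|)%N.
    by have := cards2 x y; rewrite nxy => <-; apply: subset_leq_card; rewrite subUset !sub1set xW yW.
  rewrite sr cW /=; case: #|G| => [|k] //= h; clia.
have : V \subset [set~ 0].
  apply/subsetP => z; rewrite !inE => /orP [/eqP ->|/orP [/eqP ->|/imsetP [i _ ->]]] //.
move/subset_leq_card; rewrite cV cardsC1.
have G0 : (0 < #|G|)%N by apply/card_gt0P; exists 0.
move: G0; case: #|G| => [|k] /=; clia.
Qed.

Lemma card_Z (n : nat) : (0 < n)%N -> #|'Z_(n.*2)| = n.*2.
Proof. move=> hn; rewrite card_ord Zp_cast //; clia. Qed.

Lemma Z_char (n : nat) : (0 < n)%N -> (n.*2)%:R = 0 :> 'Z_(n.*2).
Proof. move=> hn; apply: pchar_Zp; clia. Qed.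

Lemma mulrnN2 (n : nat) (x : 'Z_(n.*2)) : (0 < n)%N -> x *+ n.*2 = 0.
Proof. by move=> hn; rewrite -mulr_natr Z_char // mulr0. Qed.

Lemma nnZ (n : nat) : (0 < n)%N -> (n%:R : 'Z_(n.*2)) + n%:R = 0.
Proof. by move=> hn; rewrite -natrD addnn Z_char. Qed.

Lemma oppnZ (n : nat) : (0 < n)%N -> - (n%:R : 'Z_(n.*2)) = n%:R.
Proof. by move=> hn; apply/eqP; rewrite eq_sym -subr_eq0 opprK nnZ. Qed.

Lemma sumZ (n : nat) : (0 < n)%N -> \sum_(x : 'Z_(n.*2)) x = n%:R.
Proof.
move=> hn.
have -> : \sum_(x : 'Z_(n.*2)) x = \sum_(x : 'Z_(n.*2)) (x : nat)%:R.
  by apply: eq_bigr => x _; rewrite natr_Zp.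
rewrite -natr_sum.
have -> : (\sum_(x : 'Z_(n.*2)) (x : nat))%N = (\sum_(0 <= i < n.*2) i)%N.
  rewrite big_mkord Zp_cast; last clia.
  done.
rewrite bin2_sum bin2.
have -> : ((n.*2 * (n.*2).-1)./2 = n * (n.*2).-1)%N.
  by rewrite -doubleMl doubleK.
have e : (n * (n.*2).-1 + n = n * n.*2)%N.
  case: n hn => // m _; rewrite doubleS /= mulnS; clia.
apply/eqP; rewrite -(subr_eq0 _ n%:R) -oppnZ // opprK -natrD e natrM Z_char // mulr0.
done.
Qed.

Lemma twoN (n k : nat) : (k < n.*2)%N -> ((k * 2) %% n.*2 = 0)%N -> k = 0%N \/ k = n.
Proof.
move=> kl; case: (ltnP k n) => kn.
  rewrite modn_small; last clia. clia.
rewrite -(subnKC kn) mulnDl muln2 -modnDml modnn add0n modn_small; clia.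
Qed.

Lemma twoZ (n : nat) (x : 'Z_(n.*2)) : (0 < n)%N -> x + x = 0 -> x = 0 \/ x = n%:R.
Proof.
move=> hn; rewrite -mulr2n.
have h2 : (1 < n.*2)%N by clia.
move/(congr1 (fun z : 'Z_(n.*2) => (z : nat))).
rewrite Zp_mulrn /= => E.
have xl : ((x : nat) < n.*2)%N by have := ltn_ord x; rewrite [X in (_ < X)%N]Zp_cast.
have E' : (((x : nat) * 2) %% n.*2 = 0)%N by move: E; rewrite [X in (_ %% X)%N]Zp_cast.
case: (@twoN n _ xl E') => {}E.
  by left; apply: val_inj; rewrite /= E.
by right; apply: val_inj; rewrite /= val_Zp_nat // E modn_small //; clia.
Qed.

Lemma two_sol (n : nat) (t : 'Z_(n.*2)) : (0 < n)%N ->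
  (#|[set d : 'Z_(n.*2) | (d + d)%R == t]| <= 2)%N.
Proof.
move=> hn.
have [E|[d0]] := set_0Vmem [set d : 'Z_(n.*2) | (d + d)%R == t]; first by rewrite E cards0.
rewrite inE => /eqP h0.
apply: (@leq_trans #|[set d0; d0 + n%:R]|); last by rewrite cards2; case: (_ != _).
apply: subset_leq_card; apply/subsetP => d; rewrite !inE => /eqP hd.
have : (d - d0) + (d - d0) = 0.
  by rewrite addrACA -opprD hd h0 subrr.
case/twoZ => // E.
  by rewrite -(subrK d0 d) E add0r eqxx.
by rewrite -(subrK d0 d) E addrC eqxx orbT.
Qed.

Lemma gen_surj (n : nat) (g : 'Z_(n.*2)) : (0 < n)%N ->
  (forall k, (0 < k < n.*2)%N -> g *+ k != 0) ->
  forall h : 'Z_(n.*2), exists j, (j < n.*2)%N /\ h = g *+ j.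
Proof.
move=> hn gk h.
pose F (j : 'I_(n.*2)) := g *+ j.
have Finj : injective F.
  move=> i j; rewrite /F => E.
  wlog lij : i j E / (i <= j)%N.
    move=> H; case: (leqP i j) => l; first exact: H.
    by apply/esym/H => //; apply: ltnW.
  apply/val_inj/eqP; rewrite eqn_leq lij /=; apply/negP => /negP; rewrite -ltnNge => lt.
  have : g *+ (j - i) == 0.
    by rewrite mulrnBr // E subrr.
  apply/negP; apply: gk; rewrite subn_gt0 lt /=.
  have := ltn_ord j; clia.
have : h \in [set F j | j in 'I_(n.*2)].
  have -> : [set F j | j in 'I_(n.*2)] = setT; last by rewrite inE.
  by apply/eqP; rewrite eqEcard subsetT /= cardsT card_imset // card_Z // card_ord leqnn.
case/imsetP => j _ ->; exists j; split => //.
Qed.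

Lemma cardU_le (T : finType) (A B : {set T}) : (#|A :|: B| <= #|A| + #|B|)%N.
Proof. exact: (leq_card_setU A B).1. Qed.

Lemma SLs (n m : nat) (t : 'Z_(n.*2)) : (2 <= m)%N -> (m < n)%N ->
  exists D : {set 'Z_(n.*2)}, 0 \notin D /\ #|D| = m /\ \sum_(d in D) d = t.
Proof.
move=> m2 mn.
have hn : (0 < n)%N by clia.
have [E [sE cE]] : exists E : {set 'Z_(n.*2)}, E \subset [set~ 0] /\ #|E| = (m - 2)%N.
  apply: ex_subset; rewrite cardsC1 card_Z //; clia.
have E0 : 0 \notin E by apply/negP => /(subsetP sE); rewrite !inE eqxx.
set t' := t - \sum_(e in E) e.
set Z0 := 0 |: E.
have cZ0 : #|Z0| = (m - 1)%N by rewrite cardsU1 E0 cE; clia.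
set Bd := Z0 :|: [set t' - e | e in Z0] :|: [set d : 'Z_(n.*2) | (d + d)%R == t'].
have cBd : (#|Bd| < #|'Z_(n.*2)|)%N.
  rewrite card_Z // /Bd.
  set A1 := Z0 :|: _.
  set C1 := [set d : 'Z_(n.*2) | _].
  have h1 := cardU_le _ A1 C1.
  have h4 : (#|C1| <= 2)%N by apply: two_sol.
  have h2 : (#|A1| <= #|Z0| + #|Z0|)%N.
    apply: (leq_trans (cardU_le _ _ _)); rewrite leq_add2l; apply: leq_imset_card.
  move: h1 h2 h4; rewrite cZ0; move: (#|A1 :|: C1|) (#|A1|) (#|C1|) => a b c; rewrite -addnn; clia.
have [d dB] : exists d, d \notin Bd.
  case: (pickP [pred d | d \notin Bd]) => [d dB|H]; first by exists d.
  have E1 : Bd = setT by apply/setP => z; rewrite in_setT; apply/negbFE; exact: (H z).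
  by move: cBd; rewrite E1 cardsT ltnn.
move: dB; rewrite !inE !negb_or => /andP [/andP [/andP [dn0 dE] dimg] ddt].
have tdZ : t' - d \notin Z0.
  apply/negP => H; move/negP: dimg; apply; apply/imsetP; exists (t' - d) => //.
  by rewrite opprB addrC subrK.
move: tdZ; rewrite !inE negb_or => /andP [td0 tdE].
have dtd : d != t' - d.
  apply/negP => /eqP H; move/negP: ddt; apply; rewrite {2}H addrC subrK.
  done.
exists (d |: ((t' - d) |: E)); split; last split.
- by rewrite !inE !negb_or eq_sym dn0 eq_sym td0 E0.
- by rewrite cardsU1 cardsU1 !inE negb_or dtd dE tdE cE; clia.
- rewrite big_setU1 /=; last by rewrite !inE negb_or dtd dE.
  rewrite big_setU1 //= addrA addrC (addrC d) subrK /t' addrC subrK.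
  done.
Qed.

Lemma SL (n m : nat) (t : 'Z_(n.*2)) : (0 < n)%N -> (m <= (n.*2).-2)%N ->
  (m = 0%N -> t = 0) -> (m = 1%N -> t != 0) -> (m = (n.*2).-2 -> t != n%:R) ->
  exists D : {set 'Z_(n.*2)}, 0 \notin D /\ #|D| = m /\ \sum_(d in D) d = t.
Proof.
move=> hn mle h0 h1 h2.
case: (ltnP m 2) => m2.
  case: m m2 mle h0 h1 h2 => [|[|//]] _ _ h0 h1 h2.
    by exists set0; rewrite cards0 big_set0 inE h0.
  exists [set t]; rewrite cards1 big_set1 inE eq_sym h1 //.
case: (ltnP m n) => mn; first exact: SLs.
set m' := ((n.*2).-1 - m)%N.
set t' : 'Z_(n.*2) := n%:R - t.
have [D' [D'0 [cD' sD']]] : exists D' : {set 'Z_(n.*2)}, 0 \notin D' /\ #|D'| = m' /\ \sum_(d in D') d = t'.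
  case: (ltnP m' 2) => m'2.
    have m'1 : m' = 1%N by rewrite /m'; clia.
    exists [set t']; rewrite cards1 big_set1 inE m'1; split => //.
    rewrite eq_sym /t' subr_eq0 eq_sym; apply: h2; rewrite /m' in m'1; clia.
  apply: SLs => //; rewrite /m'; clia.
exists ([set~ 0] :\: D'); split; last split.
- by rewrite !inE eqxx andbF.
- rewrite cardsDS; last by apply/subsetP => z zD; rewrite !inE; apply/eqP => E; move: D'0; rewrite -E zD.
  rewrite cardsC1 card_Z // cD' /m'; clia.
- have := big_setID (aop := GRing.add) D' (fun x : 'Z_(n.*2) => x) (A := [set~ 0]).
  have -> : [set~ 0] :&: D' = D'.
    by apply/setIidPr/subsetP => z zD; rewrite !inE; apply/eqP => E; move: D'0; rewrite -E zD.
  rewrite sD' => E.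
  have : \sum_(x : 'Z_(n.*2)) x = t' + \sum_(i in [set~ 0] :\: D') i.
    rewrite -E (bigD1 0) //= add0r; apply: eq_bigl => z; rewrite !inE.
    done.
  rewrite sumZ // /t' => E2; apply: (addrI (n%:R - t)); by rewrite -E2 subrK.
Qed.

Definition good (n k : nat) (s : 'Z_(n.*2)) :=
  exists D : {set 'Z_(n.*2)}, 0 \notin D /\ (#|D| + k = n.*2)%N /\ \sum_(d in D) d + s = 0.

Lemma good_SL (n k : nat) (s : 'Z_(n.*2)) : (0 < n)%N -> (2 <= k <= n.*2)%N ->
  (k = n.*2 -> s = 0) -> (k = (n.*2).-1 -> s != 0) -> (k = 2%N -> s != n%:R) ->
  good n k s.
Proof.
move=> hn /andP [k2 kn] h0 h1 h2.
have p1 : (n.*2 - k <= (n.*2).-2)%N by clia.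
have p2 : ((n.*2 - k)%N = 0%N -> - s = 0) by move=> e; rewrite h0 ?oppr0 //; clia.
have p3 : ((n.*2 - k)%N = 1%N -> - s != 0) by move=> e; rewrite oppr_eq0 h1 //; clia.
have p4 : ((n.*2 - k)%N = (n.*2).-2 -> - s != n%:R).
  by move=> e; rewrite -oppnZ // eqr_opp h2 //; clia.
have [D [D0 [cD sD]]] := @SL n (n.*2 - k)%N (- s) hn p1 p2 p3 p4.
exists D; split => //; split; first clia.
by rewrite sD addNr.
Qed.

Lemma avoid (T : finType) (G : zmodType) (f : T -> G) (W : {set T})
  (hinj : {in W &, injective f}) (m : nat) (b : G) :
  (0 < m < #|W|)%N -> exists W' : {set T}, W' \subset W /\ #|W'| = m /\ \sum_(w in W') f w != b.
Proof.
move=> /andP [m0 mW].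
have [W0 [s0 c0]] := @ex_subset T W m (ltnW mW).
case: (eqVneq (\sum_(w in W0) f w) b) => hb; last by exists W0.
have : (0 < #|W0|)%N by rewrite c0.
case/card_gt0P => w wW0.
have : (0 < #|W :\: W0|)%N by rewrite cardsDS // c0 subn_gt0.
case/card_gt0P => w'; rewrite inE => /andP [w'W0 w'W].
have wW : w \in W by apply: (subsetP s0).
exists (w' |: (W0 :\ w)); split; last split.
- by rewrite subUset sub1set w'W (subset_trans (subD1set _ _) s0).
- rewrite cardsU1 !inE negb_and negbK w'W0 orbT /=.
  by have := cardsD1 w W0; rewrite wW0 c0; clia.
- rewrite big_setU1 /=; last by rewrite !inE negb_and negbK w'W0 orbT.
  move: hb; rewrite (big_setD1 w) //= => <-.
  apply/negP => /eqP /addIr E.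
  have ww : w' = w by apply: hinj.
  by move: w'W0; rewrite ww wW0.
Qed.

Notation PT n := ('Z_(n.*2) * 'Z_(n.*2))%type.

Definition goalT (n : nat) (B : {set PT n}) :=
  exists T : {set PT n}, T \subset B /\ \sum_(t in T) t.1 = 0 /\
    good n #|T| (\sum_(t in T) t.2).

Lemma snd_inj (n : nat) (W : {set PT n}) (g : 'Z_(n.*2)) :
  (forall w, w \in W -> w.1 = g) -> {in W &, injective snd}.
Proof.
move=> hW [a b] [c d] /hW /= ha /hW /= hc /= hbd.
by rewrite ha hc hbd.
Qed.

Lemma lemmaQ (n : nat) (B W : {set PT n}) (g : 'Z_(n.*2)) (v : PT n) :
  (2 <= n)%N -> (forall b, b \in B -> b.1 != 0) -> W \subset B ->
  #|W| = (n.*2).-1 -> (forall w, w \in W -> w.1 = g) ->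
  (forall k, (0 < k < n.*2)%N -> g *+ k != 0) ->
  v \in B -> v \notin W -> v.1 != g -> goalT n B.
Proof.
move=> hn B0 sWB cW hW gk vB vW vg.
have hn0 : (0 < n)%N by clia.
have [j [jl vj]] := @gen_surj n g hn0 gk v.1.
have j0 : j != 0%N.
  by apply/eqP => E; move: (B0 v vB); rewrite vj E mulr0n eqxx.
have j1 : j != 1%N.
  by apply/eqP => E; move: vg; rewrite vj E mulr1n eqxx.
set m := (n.*2 - j)%N.
set b := (if j == (n.*2).-1 then n%:R else 0) - v.2.
have [W' [sW' [cW' sW'b]]] : exists W' : {set PT n}, W' \subset W /\ #|W'| = m /\
    \sum_(w in W') w.2 != b.
  apply: avoid; first exact: snd_inj hW.
  rewrite cW /m; apply/andP; split; clia.
have vW' : v \notin W' by apply: contra vW; apply: (subsetP sW').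
exists (v |: W'); split; last split.
- by rewrite subUset sub1set vB (subset_trans sW' sWB).
- rewrite big_setU1 //= vj.
  rewrite (eq_bigr (fun _ => g)); last by move=> w /(subsetP sW') /hW.
  rewrite sumr_const cW' -mulrnDr /m subnKC; last clia.
  exact: mulrnN2.
- rewrite cardsU1 vW' cW' big_setU1 //=.
  apply: good_SL => //.
  + apply/andP; split; clia.
  + move=> E; exfalso; clia.
  + move=> E; have jj : j = 2%N by clia.
    move: sW'b; rewrite /b jj.
    have -> : (2 == (n.*2).-1)%N = false by apply/eqP; clia.
    rewrite sub0r; apply: contra => /eqP E2.
    by rewrite -(addKr v.2 (\sum_(i in W') i.2)) E2 addr0.
  + move=> E; have jj : j = (n.*2).-1 by clia.
    move: sW'b; rewrite /b jj eqxx.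
    apply: contra => /eqP E2.
    by rewrite -(addKr v.2 (\sum_(i in W') i.2)) E2 addrC.
Qed.

Definition zsf (n : nat) (W : {set PT n}) :=
  forall S : {set PT n}, S \subset W -> S != set0 -> \sum_(t in S) t.1 != 0.
Arguments zsf {n}.

Lemma card_line (n : nat) (g : 'Z_(n.*2)) (A : {set PT n}) : (0 < n)%N ->
  (forall x, x \in A -> x.1 = g) -> (#|A| <= n.*2)%N.
Proof.
move=> hn hA.
have : A \subset [set (g, y) | y : 'Z_(n.*2)].
  apply/subsetP => -[a b] xA; apply/imsetP; exists b => //.
  by rewrite -(hA _ xA).
move/subset_leq_card; rewrite card_imset ?card_Z //.
by move=> y y' /(congr1 snd).
Qed.

Lemma core3 (n : nat) (B U : {set PT n}) : (2 <= n)%N ->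
  #|B| = (n.*2).+2 -> (forall b, b \in B -> b.1 != 0) ->
  U \subset B -> #|U| = n.*2 ->
  (forall u v, u \in U -> v \in U -> u != v -> u.1 + v.1 != 0) -> goalT n B.
Proof.
move=> hn cB B0 sUB cU nop.
have hn0 : (0 < n)%N by clia.
case: (classic (exists T : {set PT n}, [/\ T \subset U, \sum_(t in T) t.1 = 0,
   (3 <= #|T|)%N & (#|T| <= (n.*2).-2)%N])) => [[T [sTU s1 c3 c4]]|H3].
  exists T; split; first exact: (subset_trans sTU sUB).
  split => //; apply: good_SL => //; try (by move=> _); try (move=> E; exfalso; clia).
  apply/andP; split; clia.
have [W [sWU [cW zW]]] : exists W : {set PT n}, W \subset U /\ #|W| = (n.*2).-1 /\ zsf W.
  apply: NNPP => Hn.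
  have allz : forall u, u \in U -> \sum_(t in U :\ u) t.1 = 0.
    move=> u uU.
    have cW : #|U :\ u| = (n.*2).-1.
      by have := cardsD1 u U; rewrite uU cU; clia.
    case: (classic (zsf (U :\ u))) => [Z|NZ].
      by exfalso; apply: Hn; exists (U :\ u); split => //; apply: subD1set.
    have [S [sS [S0 sS0]]] : exists S : {set PT n}, S \subset U :\ u /\ S != set0 /\
        \sum_(t in S) t.1 = 0.
      apply: NNPP => H; apply: NZ => S sS S0; apply/eqP => E; apply: H.
      by exists S.
    have sSU : S \subset U := subset_trans sS (subD1set _ _).
    have cS : ((n.*2).-1 <= #|S|)%N.
      case: (leqP (n.*2).-1 #|S|) => // lt.
      exfalso.
      have : (0 < #|S|)%N by rewrite card_gt0.
      case: (ltnP #|S| 3) => l3 g0.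
        case cs: #|S| g0 l3 => [|[|[|//]]] // _ _.
          move/eqP/cards1P: cs => [s Es].
          move: sS0; rewrite Es big_set1 => /eqP; apply/negP; apply: B0.
          by apply: (subsetP sUB); apply: (subsetP sSU); rewrite Es inE.
        move/eqP/cards2P: cs => [p [q [pq Es]]].
        move: sS0; rewrite Es big_setU1 ?big_set1 /=; last by rewrite inE.
        apply/eqP; apply: nop => //; apply: (subsetP sSU); rewrite Es !inE eqxx ?orbT //.
      apply: H3; exists S; split => //; clia.
    have ES : S = U :\ u by apply/eqP; rewrite eqEcard sS cW cS.
    by rewrite -ES.
  have [u0 u0U] : exists u0, u0 \in U.
    by apply/card_gt0P; rewrite cU; clia.
  set g := \sum_(t in U) t.1.
  have hg : forall u, u \in U -> u.1 = g.
    by move=> u uU; rewrite /g (big_setD1 u) //= allz // addr0.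
  have := allz u0 u0U.
  rewrite (eq_bigr (fun _ => g)); last by move=> x; rewrite inE => /andP [_ /hg].
  rewrite sumr_const.
  have -> : #|U :\ u0| = (n.*2).-1 by have := cardsD1 u0 U; rewrite u0U cU; clia.
  move=> E; move: (B0 u0 (subsetP sUB _ u0U)); rewrite hg //.
  have := @mulrnN2 n g hn0.
  have e : n.*2 = ((n.*2).-1).+1 by clia.
  by rewrite [X in _ *+ X]e mulrS E addr0 => ->; rewrite eqxx.
have cWG : #|W| = #|'Z_(n.*2)|.-1 by rewrite card_Z.
have alleq := @swap_lemma _ _ fst W zW cWG.
have [w0 w0W] : exists w0, w0 \in W.
  by apply/card_gt0P; rewrite cW; clia.
set g := w0.1.
have hW : forall w, w \in W -> w.1 = g by move=> w wW; apply: alleq.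
have gk : forall k, (0 < k < n.*2)%N -> g *+ k != 0.
  move=> k /andP [k0 kn].
  have [S [sS cS]] := @ex_subset _ W k (ltac:(rewrite cW; clia)).
  have := zW S sS.
  rewrite (eq_bigr (fun _ => g)); last by move=> x /(subsetP sS) /hW.
  rewrite sumr_const cS; apply.
  by rewrite -card_gt0 cS.
have sWB : W \subset B := subset_trans sWU sUB.
have [u uUW] : exists u, u \in U :\: W.
  by apply/card_gt0P; rewrite cardsDS // cU cW; clia.
move: uUW; rewrite inE => /andP [uW uU].
have uB : u \in B := subsetP sUB _ uU.
case: (eqVneq u.1 g) => ug; last exact: (@lemmaQ n B W g u hn B0 sWB cW hW gk uB uW ug).
have [v vBU] : exists v, v \in B :\: U.
  by apply/card_gt0P; rewrite cardsDS // cU cB; clia.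
move: vBU; rewrite inE => /andP [vU vB].
have vW : v \notin W by apply: contra vU; apply: (subsetP sWU).
apply: (@lemmaQ n B W g v hn B0 sWB cW hW gk vB vW).
apply/negP => /eqP vg.
have uv : u != v by apply: contra vU => /eqP <-.
have := @card_line n g (v |: (u |: W)) hn0.
rewrite cardsU1 cardsU1 !inE negb_or eq_sym uv vW uW cW /=.
have -> : (1 + (1 + (n.*2).-1) <= n.*2)%N = false by apply/negbTE; clia.
move=> H; suff : false by []; apply: H => x; rewrite !inE => /orP [/eqP ->|/orP [/eqP ->|/hW]] //.
Qed.

Lemma core (n : nat) (B : {set PT n}) : (2 <= n)%N ->
  #|B| = (n.*2).+2 -> (forall b, b \in B -> b.1 != 0) -> goalT n B.
Proof.
move=> hn cB B0.
have hn0 : (0 < n)%N by clia.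
case: (classic (exists u v, [/\ u \in B, v \in B, u != v, u.1 + v.1 = 0
   & u.2 + v.2 != n%:R])) => [[u [v [uB vB uv s1 s2]]]|H1].
  exists (u |: [set v]); split; first by rewrite subUset !sub1set uB vB.
  have uv' : u \notin [set v] by rewrite inE.
  have c2 : #|u |: [set v]| = 2%N by rewrite cardsU1 uv' cards1.
  rewrite !big_setU1 //= !big_set1 s1 c2; split => //.
  apply: good_SL => //; try (by move=> _); try (move=> E; exfalso; clia).
  by apply/andP; split; clia.
have H1' : forall u v, u \in B -> v \in B -> u != v -> u.1 + v.1 = 0 -> u.2 + v.2 = n%:R.
  move=> u v uB vB uv s1; apply/eqP; apply: NNPP => s2; apply: H1; exists u, v.
  by split => //; apply/negP.
case: (classic (exists u v, [/\ u \in B, v \in B, u != v & u.1 + v.1 = 0]))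
  => [[u [v [uB vB uv s1]]]|H2]; last first.
  have [U [sUB cU]] := @ex_subset _ B (n.*2) (ltac:(rewrite cB; clia)).
  apply: (@core3 n B U hn cB B0 sUB cU) => x y xU yU xy; apply/eqP => E; apply: H2.
  by exists x, y; split => //; apply: (subsetP sUB).
set U := B :\ u :\ v.
case: (classic (exists p q, [/\ p \in U, q \in U, p != q & p.1 + q.1 = 0]))
  => [[p [q [pU qU pq t1]]]|H3]; last first.
  apply: (@core3 n B U hn cB B0).
  - by apply: (subset_trans (subD1set _ _) (subD1set _ _)).
  - have c1 := cardsD1 u B; have c2 := cardsD1 v (B :\ u).
    rewrite uB in c1; rewrite !inE eq_sym uv vB /= in c2.
    move: c1 c2; rewrite cB /U; move: #|B :\ u :\ v| #|B :\ u| => a b; clia.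
  - move=> x y xU yU xy; apply/eqP => E; apply: H3.
    by exists x, y.
move: pU qU; rewrite !inE => /and3P [pv pu pB] /and3P [qv qu qB].
exists (u |: (v |: (p |: [set q]))).
have nq : q \notin [set q] = false by rewrite inE eqxx.
have hp : p \notin [set q] by rewrite inE.
have hv : v \notin p |: [set q] by rewrite !inE negb_or (eq_sym v p) pv (eq_sym v q) qv.
have hu : u \notin v |: (p |: [set q]) by rewrite !inE !negb_or uv (eq_sym u p) pu (eq_sym u q) qu.
split; first by rewrite !subUset !sub1set uB vB pB qB.
have S4 : forall F : PT n -> 'Z_(n.*2),
    \sum_(t in u |: (v |: (p |: [set q]))) F t = F u + F v + (F p + F q).
  by move=> F; rewrite (big_setU1 _ hu) (big_setU1 _ hv) (big_setU1 _ hp) big_set1 /= addrA.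
rewrite !S4 s1 t1 addr0; split => //.
rewrite (H1' u v) // (H1' p q) //.
have -> : #|u |: (v |: (p |: [set q]))| = 4%N by rewrite !cardsU1 hu hv hp cards1.
rewrite nnZ //; apply: good_SL.
- exact: hn0.
- by apply/andP; split => //; move: hn; clear; clia.
- by [].
- move=> E; exfalso; move: hn E; clear; clia.
- by [].
Qed.

Lemma sum_fst (T : finType) (G H : zmodType) (A : {pred T}) (F : T -> G * H) :
  (\sum_(i in A) F i).1 = \sum_(i in A) (F i).1.
Proof. by apply: (big_morph fst). Qed.

Lemma sum_snd (T : finType) (G H : zmodType) (A : {pred T}) (F : T -> G * H) :
  (\sum_(i in A) F i).2 = \sum_(i in A) (F i).2.
Proof. by apply: (big_morph snd). Qed.

Theorem theorem3p2 (n : nat) (hn : (2 <= n)%N)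
  (X : {set 'Z_(n.*2) * 'Z_(n.*2)}) (hX : #|X| = (4 * n).+1)
  (a : 'Z_(n.*2))
  (ha : #|[set x in X | x.1 == a]| = (n.*2).-1) :
  exists S : {set 'Z_(n.*2) * 'Z_(n.*2)},
    [/\ S \subset X, #|S| = n.*2 & \sum_(s in S) s = 0].
Proof.
have hn0 : (0 < n)%N by clia.
set Y := [set y : 'Z_(n.*2) | (a, y) \in X].
have cY : #|Y| = (n.*2).-1.
  rewrite -ha -(card_imset _ (fun y y' (e : (a, y) = (a, y')) => congr1 snd e)).
  apply: eq_card => x; rewrite !inE.
  apply/imsetP/andP => [[y]|[xX /eqP xa]].
    by rewrite inE => yX ->.
  by exists x.2; rewrite ?inE -xa -?surjective_pairing.
have [c cY'] : exists c, c \notin Y.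
  case: (pickP [pred c | c \notin Y]) => [c cc|H]; first by exists c.
  have : Y = setT by apply/setP => z; rewrite in_setT; apply/negbFE; exact: (H z).
  by move=> E; move: cY; rewrite E cardsT card_Z //; move: hn0; clear; clia.
have hY : forall y, y != c -> (a, y) \in X.
  have : Y = [set~ c].
    apply/eqP; rewrite eqEcard cardsC1 card_Z // cY leqnn andbT.
    by apply/subsetP => y yY; rewrite !inE; apply: contraNneq cY' => <-.
  move=> E y yc; have : y \in Y by rewrite E !inE.
  by rewrite inE.
set B := [set x in X | x.1 != a].
have cB : #|B| = (n.*2).+2.
  have := cardsID [set x : PT n | x.1 == a] X.
  have -> : X :&: [set x : PT n | x.1 == a] = [set x in X | x.1 == a].
    by apply/setP => x; rewrite !inE.
  have -> : X :\: [set x : PT n | x.1 == a] = B.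
    by apply/setP => x; rewrite !inE andbC.
  rewrite ha hX; move: #|B| => k; clia.
set t : PT n := (a, c).
set Bs := [set x - t | x : PT n in B].
have cBs : #|Bs| = (n.*2).+2 by rewrite card_imset //; apply: addIr.
have Bs0 : forall b, b \in Bs -> b.1 != 0.
  move=> b /imsetP [x]; rewrite inE => /andP [_ xa] ->.
  by rewrite /= subr_eq0.
have [T [sT [s1 [D [D0 [cD sD]]]]]] := @core n Bs hn cBs Bs0.
set S1 := [set z + t | z : PT n in T].
set S2 := [set ((a, c + d) : PT n) | d in D].
have S1B : S1 \subset B.
  apply/subsetP => s /imsetP [z zT ->].
  have := subsetP sT z zT; case/imsetP => x xB ->.
  by rewrite subrK.
have S2X : S2 \subset X.
  apply/subsetP => s /imsetP [d dD ->]; apply: hY.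
  apply/negP => /eqP E; move: D0; rewrite -(addrI c (etrans E (esym (addr0 c)))) dD.
  done.
have dj : [disjoint S1 & S2].
  rewrite -setI_eq0; apply/eqP/setP => x; rewrite !inE.
  apply/negP => /andP [/(subsetP S1B)]; rewrite inE => /andP [_ xa] /imsetP [d _ E].
  by move: xa; rewrite E /= eqxx.
have cS1 : #|S1| = #|T| by rewrite card_imset //; apply: addIr.
have inj2 : injective (fun d : 'Z_(n.*2) => ((a, c + d) : PT n)).
  by move=> d d' /(congr1 snd) /= /addrI.
have cS2 : #|S2| = #|D| by rewrite card_imset.
exists (S1 :|: S2); split.
- rewrite subUset S2X andbT; apply: (subset_trans S1B).
  by apply/subsetP => x; rewrite inE => /andP [].
- by rewrite cardsU (disjoint_setI0 dj) cards0 subn0 cS1 cS2 addnC.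
- have -> : \sum_(s in S1 :|: S2) s = \sum_(s in S1) s + \sum_(s in S2) s.
    rewrite -bigU //; apply: eq_bigl => x; rewrite !inE.
    done.
  rewrite !big_imset /=; try (by move=> x y _ _ E; apply: (addIr t)); try (by move=> x y _ _; apply: inj2).
  set sig := _ + _.
  have eT1 : (\sum_(i in T) (i + t)).1 = \sum_(i in T) i.1 + a *+ #|T|.
    by rewrite sum_fst /= big_split /= sumr_const.
  have eT2 : (\sum_(i in T) (i + t)).2 = \sum_(i in T) i.2 + c *+ #|T|.
    by rewrite sum_snd /= big_split /= sumr_const.
  have eD1 : (\sum_(i in D) ((a, c + i) : PT n)).1 = a *+ #|D|.
    by rewrite sum_fst /= sumr_const.
  have eD2 : (\sum_(i in D) ((a, c + i) : PT n)).2 = c *+ #|D| + \sum_(i in D) i.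
    by rewrite sum_snd /= big_split /= sumr_const.
  have e1 : sig.1 = 0.
    have -> : sig.1 = (\sum_(i in T) (i + t)).1 + (\sum_(i in D) ((a, c + i) : PT n)).1 by [].
    rewrite eT1 eD1 s1 add0r -mulrnDr addnC cD.
    exact: mulrnN2.
  have e2 : sig.2 = 0.
    have -> : sig.2 = (\sum_(i in T) (i + t)).2 + (\sum_(i in D) ((a, c + i) : PT n)).2 by [].
    rewrite eT2 eD2 (addrC (c *+ #|D|)) addrACA -mulrnDr addnC cD mulrnN2 // addr0.
    by rewrite addrC.
  by rewrite [sig]surjective_pairing e1 e2.
Qed.
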